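(* Let $F \in \mathbb{C}^{n \times n}$ be a unitary matrix and let $y = F\hat{x} + e$, where $\hat{x} \in \mathbb{C}^{n}$ is $k$-sparse and $e \in \mathbb{C}^{n}$. If $\|e\|_{\infty} \leq \eta_1$ and $\|F^*e\|_{\infty} \leq \eta_{2}$, then any solution $x^{\#}$ of the modified Dantzig Selector problem $$\min_{z \in \mathbb{C}^{n}}\|z\|_1 \quad \text{subject to} \quad \|F^*(y - Fz)\|_\infty \leq \eta_2, \quad \|Fz - y\|_\infty \leq \eta_1$$ satisfies $$\| x^{\#}-\hat{x}\|_1 \leq 4k\eta_2 \quad\text{and}\quad \| x^{\#}-\hat{x}\|_2 \leq 6\sqrt{k}\,\eta_2 .$$
   Context: A vector is $k$-sparse if it has at most $k$ nonzero entries. $F^*$ denotes the conjugate transpose of $F$. *)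

(* Defs.v *)
(* Complex numbers are modelled by an arbitrary
   numClosedFieldType C (e.g. algC, or R[i] for a real closed field R). *)
From HB Require Import structures.
From mathcomp Require Import all_boot all_order all_algebra.
From mathcomp Require Import sesquilinear spectral.
Set Implicit Arguments. Unset Strict Implicit. Unset Printing Implicit Defensive.
Import Order.TTheory GRing.Theory Num.Theory.
Local Open Scope ring_scope.

Section Norms.
Variables (C : numClosedFieldType) (n : nat).

Definition norm1 (z : 'cV[C]_n) : C := \sum_i `|z i 0|.
Definition norm2 (z : 'cV[C]_n) : C := sqrtC (\sum_i `|z i 0| ^+ 2).
Definition norminf (z : 'cV[C]_n) : C := \big[Num.max/0]_i `|z i 0|.

Definition sparse (k : nat) (z : 'cV[C]_n) : Prop :=
  (#|[set i | z i ord0 != 0%R]| <= k)%N.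

Definition adj (F : 'M[C]_n) : 'M[C]_n := (F ^t*)%sesqui.


Definition mds_feasible (F : 'M[C]_n) (y : 'cV[C]_n) (eta1 eta2 : C)
  (z : 'cV[C]_n) : Prop :=
  norminf (adj F *m (y - F *m z)) <= eta2 /\ norminf (F *m z - y) <= eta1.

Definition mds_solution (F : 'M[C]_n) (y : 'cV[C]_n) (eta1 eta2 : C)
  (x : 'cV[C]_n) : Prop :=
  mds_feasible F y eta1 eta2 x /\
  forall z, mds_feasible F y eta1 eta2 z -> norm1 x <= norm1 z.

End Norms.

(* Main.v *)
Require Import Defs.
From HB Require Import structures.
From mathcomp Require Import all_boot all_order all_algebra.
From mathcomp Require Import sesquilinear spectral.
From mathcomp Require Import ring.
Import Order.TTheory GRing.Theory Num.Theory.
Local Open Scope ring_scope.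

Lemma bigmax_seq (C : numClosedFieldType) (I : eqType) (f : I -> C) (r : seq I) :
  (forall i, 0 <= f i) ->
  0 <= \big[Num.max/0]_(j <- r) f j /\
  forall i, i \in r -> f i <= \big[Num.max/0]_(j <- r) f j.
Proof.
move=> f0; elim: r => [|a r [IH1 IH2]]; first by rewrite big_nil.
have cp : (f a >=< \big[Num.max/0]_(j <- r) f j)%O.
  by apply: real_comparable; apply: ger0_real.
rewrite big_cons; split.
  by rewrite comparable_le_max // f0.
move=> i; rewrite in_cons => /orP [/eqP -> | ir].
  by rewrite comparable_le_max // lexx.
by rewrite comparable_le_max // IH2 ?orbT.
Qed.

Lemma norminf_ge {C : numClosedFieldType} {n} (z : 'cV[C]_n) i :
  `|z i 0| <= norminf z.
Proof.
rewrite /norminf; have [_ H] := @bigmax_seq _ _ (fun j => `|z j 0|) (index_enum 'I_n) (fun _ => normr_ge0 _).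
by apply: H; rewrite mem_index_enum.
Qed.

Lemma norminf_ge0 {C : numClosedFieldType} {n} (z : 'cV[C]_n) :
  0 <= norminf z.
Proof.
by have [H _] := @bigmax_seq _ _ (fun j => `|z j 0|) (index_enum 'I_n) (fun _ => normr_ge0 _).
Qed.

Lemma norminfN {C : numClosedFieldType} {n} (z : 'cV[C]_n) :
  norminf (- z) = norminf z.
Proof. by rewrite /norminf; apply: eq_bigr => i _; rewrite mxE normrN. Qed.

Lemma adjK {C : numClosedFieldType} {n} (F : 'M[C]_n) :
  F \is unitarymx -> adj F *m F = 1%:M.
Proof. by move=> HU; have := mulmxKtV (1%:M : 'M[C]_n) HU erefl; rewrite mul1mx. Qed.

Theorem theorem4 (C : numClosedFieldType) (n k : nat) (F : 'M[C]_n)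
  (xhat e y xs : 'cV[C]_n) (eta1 eta2 : C) :
  F \is unitarymx ->
  sparse k xhat ->
  y = F *m xhat + e ->
  norminf e <= eta1 ->
  norminf (adj F *m e) <= eta2 ->
  mds_solution F y eta1 eta2 xs ->
  norm1 (xs - xhat) <= 4 * k%:R * eta2 /\
  norm2 (xs - xhat) <= 6 * sqrtC (k%:R) * eta2.
Proof.
move=> HU Hsp Hy He1 He2 [[Hx2 Hx1] Hmin].
have eta2_ge0 : 0 <= eta2 := le_trans (norminf_ge0 (adj F *m e)) He2.
have Hfeas : mds_feasible F y eta1 eta2 xhat.
  split.
    by rewrite Hy addrAC subrr add0r.
  by rewrite Hy opprD addrA subrr add0r norminfN.
have Hl1 := Hmin _ Hfeas.
set h := xs - xhat.
have hE : h = - (adj F *m (y - F *m xs)) + adj F *m e.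
  rewrite -mulmxN -mulmxDr opprB Hy.
  have -> : F *m xs - (F *m xhat + e) + e = F *m h.
    by rewrite /h mulmxBr opprD addrA subrK.
  by rewrite mulmxA adjK // mul1mx.
have hinf : forall i, `|h i 0| <= eta2 *+ 2.
  move=> i; rewrite hE mxE [X in `|X + _|]mxE mulr2n.
  apply: le_trans (ler_normD _ _) _; rewrite normrN.
  by apply: lerD; apply: le_trans (norminf_ge _ _) _.
set S := [set i | xhat i 0 != 0].
have hE' : forall i, h i 0 = xs i 0 - xhat i 0 by move=> i; rewrite !mxE.
have e1 : norm1 xhat = \sum_(i in S) `|xhat i 0|.
  rewrite /norm1 (bigID (fun i => i \in S)) /= [X in _ + X]big1 ?addr0 // => i.
  by rewrite inE negbK => /eqP ->; rewrite normr0.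
have e2 : norm1 xs = \sum_(i in S) `|xs i 0| + \sum_(i | i \notin S) `|h i 0|.
  rewrite /norm1 (bigID (fun i => i \in S)) /=; congr (_ + _).
  by apply: eq_bigr => i; rewrite inE negbK hE' => /eqP ->; rewrite subr0.
have e3 : \sum_(i in S) (`|xhat i 0| - `|h i 0|) <= \sum_(i in S) `|xs i 0|.
  apply: ler_sum => i _; have := lerB_normD (xhat i 0) (h i 0).
  by rewrite hE' [xhat i 0 + _]addrC subrK.
have cone : \sum_(i | i \notin S) `|h i 0| <= \sum_(i in S) `|h i 0|.
  have : \sum_(i in S) (`|xhat i 0| - `|h i 0|) + \sum_(i | i \notin S) `|h i 0|
         <= \sum_(i in S) `|xhat i 0|.
    by rewrite -e1; apply: le_trans Hl1; rewrite e2 lerD2r.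
  by rewrite sumrB -addrA gerDl addrC subr_le0.
have hS : \sum_(i in S) `|h i 0| <= k%:R * (eta2 *+ 2).
  apply: (@le_trans _ _ (\sum_(i in S) eta2 *+ 2)).
    by apply: ler_sum => i _; exact: hinf.
  rewrite sumr_const -[X in X <= _]mulr_natl; apply: ler_wpM2r.
    by rewrite mulrn_wge0.
  by rewrite ler_nat; exact: Hsp.
have hl1 : norm1 h <= 4 * k%:R * eta2.
  rewrite /norm1 (bigID (fun i => i \in S)) /=.
  apply: le_trans (lerD hS (le_trans cone hS)) _.
  by rewrite le_eqVlt; apply/orP; left; apply/eqP; rewrite !mulr2n; ring.
split => //.
have b0 : 0 <= 6 * sqrtC (k%:R) * eta2.
  by rewrite !mulr_ge0 ?ler0n ?sqrtC_ge0.
rewrite /norm2 -(sqrCK b0) ler_sqrtC ?nnegrE ?sumr_ge0 ?exprn_ge0 //; last first.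
  by move=> i _; rewrite exprn_ge0.
rewrite !exprMn sqrtCK.
have H2 : \sum_i `|h i 0| ^+ 2 <= norm1 h * (eta2 *+ 2).
  rewrite /norm1 mulr_suml; apply: ler_sum => i _.
  by rewrite expr2 ler_wpM2l.
apply: le_trans H2 _; apply: le_trans (ler_wpM2r _ hl1) _.
  by rewrite mulrn_wge0.
rewrite -subr_ge0.
have -> : 6 ^+ 2 * k%:R * eta2 ^+ 2 - 4 * k%:R * eta2 * (eta2 *+ 2)
          = 28 * k%:R * eta2 ^+ 2 by rewrite mulr2n; ring.
by rewrite !mulr_ge0 ?ler0n ?exprn_ge0.
Qed.
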